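(* Let $S$ and $Y$ be binary and fix constants $c_1,c_2\in[0,1]$. Fix the observed conditional distributions $P(Y=y,S=s\mid T=t)$, $y,s,t\in\{0,1\}$, and write $P_{ys|t}=P(Y=y,S=s\mid T=t)$. Consider all joint distributions of $(S_0,S_1,Y_{00},Y_{01},Y_{10},Y_{11})$ on $\{0,1\}^6$ that are compatible with the observed distributions and satisfy $\mathrm{HR}(T\to S)\le c_1$ and $\mathrm{HR}(S\to Y\mid T=t)\le c_2$ for $t=0,1$, and assume this set is nonempty. Define $$L=\max\{L_1,L_2,L_3,L_4\},\quad L_1=0,\ L_2=P_{11|0}-P_{11|1}-c_1,\ L_3=P(Y=0\mid T=1)-P(Y=0\mid T=0),\ L_4=P_{00|1}-P_{00|0}-c_1,$$ $$U=\min\{U_1,U_2,U_3,U_4\},\quad U_1=P(Y=1\mid T=0),\ U_2=c_1+P_{10|0}+P_{01|1},\ U_3=P(Y=0\mid T=1),\ U_4=1+c_1-P_{01|0}-P_{10|1}.$$ Then every such joint distribution satisfies $L\le \mathrm{HR}(T\to Y)\le U$. Moreover the bounds are sharp: both $L$ and $U$ are attained by joint distributions in this set. In particular, the sharp bounds do not depend on $c_2$.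
   Context: Binary treatment $T\in\{0,1\}$. For $t\in\{0,1\}$, $S_t$ is the potential surrogate under treatment $t$, and for $t$ and surrogate level $s$, $Y_{ts}$ is the potential primary outcome when $T$ is set to $t$ and $S$ to $s$; write $Y_{T=t}=Y_{tS_t}$. The treatment is randomized: $T$ is independent of $(S_0,S_1,(Y_{ts})_{t,s})$, so the observed data determine $P(Y=y,S=s\mid T=t)=P(Y_{tS_t}=y,S_t=s)$. A joint distribution of the potential outcomes is ''compatible'' with given observed distributions if it induces, for each $t$, the given law of $(Y_{tS_t},S_t)$. Harm rates: $\mathrm{HR}(T\to S)=P(S_0>S_1)$ (for binary $S$: $P(S_0=1,S_1=0)$); $\mathrm{HR}(T\to Y)=P(Y_{0S_0}>Y_{1S_1})$ (for binary $Y$: $P(Y_{0S_0}=1,Y_{1S_1}=0)$); for binary $S,Y$, $\mathrm{HR}(S\to Y\mid T=t)=P(Y_{t0}=1,Y_{t1}=0)$. *)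

(* Defs.v *)
From HB Require Import structures.
From mathcomp Require Import all_boot all_order all_algebra.
Set Implicit Arguments. Unset Strict Implicit. Unset Printing Implicit Defensive.
Import Order.TTheory GRing.Theory Num.Theory.
Local Open Scope ring_scope.

(* A unit (potential-outcome profile) is ((((S0,S1),Y00),Y01),Y10),Y11) in {0,1}^6,
   with true = 1, false = 0. *)
Definition world := (bool * bool * bool * bool * bool * bool)%type.

Definition Spot (t : bool) (w : world) : bool :=
  let: (s0, s1, _, _, _, _) := w in if t then s1 else s0.

Definition Ypot (t s : bool) (w : world) : bool :=
  let: (_, _, y00, y01, y10, y11) := w in
  match t, s with
  | false, false => y00 | false, true => y01
  | true, false => y10 | true, true => y11 end.

Definition YT (t : bool) (w : world) : bool := Ypot t (Spot t w) w.

Definition is_dist (R : realFieldType) (p : world -> R) : Prop :=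
  (forall w, 0 <= p w) /\ \sum_(w : world) p w = 1.

(* Observed data: obs t y s = P(Y = y, S = s | T = t).
   Compatibility: P(Y_{t S_t} = y, S_t = s) = obs t y s for all t, y, s. *)
Definition compatible (R : realFieldType) (obs : bool -> bool -> bool -> R)
    (p : world -> R) : Prop :=
  forall t y s, \sum_(w : world | (YT t w == y) && (Spot t w == s)) p w = obs t y s.

Definition HR_TS (R : realFieldType) (p : world -> R) : R :=
  \sum_(w : world | Spot false w && ~~ Spot true w) p w.

Definition HR_TY (R : realFieldType) (p : world -> R) : R :=
  \sum_(w : world | YT false w && ~~ YT true w) p w.

Definition HR_SY (R : realFieldType) (p : world -> R) (t : bool) : R :=
  \sum_(w : world | Ypot t false w && ~~ Ypot t true w) p w.

Definition admissible (R : realFieldType) (obs : bool -> bool -> bool -> R)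
    (c1 c2 : R) (p : world -> R) : Prop :=
  [/\ is_dist p, compatible obs p, HR_TS p <= c1 &
      forall t, HR_SY p t <= c2].

Definition PY (R : realFieldType) (obs : bool -> bool -> bool -> R) (t y : bool) : R :=
  obs t y false + obs t y true.

Definition lowerL (R : realFieldType) (obs : bool -> bool -> bool -> R) (c1 : R) : R :=
  Num.max (Num.max 0 (obs false true true - obs true true true - c1))
          (Num.max (PY obs true false - PY obs false false)
                   (obs true false false - obs false false false - c1)).

Definition upperU (R : realFieldType) (obs : bool -> bool -> bool -> R) (c1 : R) : R :=
  Num.min (Num.min (PY obs false true)
                   (c1 + obs false true false + obs true false true))
          (Num.min (PY obs true false)
                   (1 + c1 - obs false false true - obs true true false)).

(* Main.v *)
Require Import Defs.
From HB Require Import structures.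
From mathcomp Require Import all_boot all_order all_algebra.
From mathcomp Require Import lra ring.
Import Order.TTheory GRing.Theory Num.Theory.
Local Open Scope ring_scope.

Lemma minP (R : realFieldType) (x y : R) :
  exists m, Num.min x y = m /\ [/\ m <= x, m <= y & (m = x \/ m = y)].
Proof. exists (Num.min x y); split=>//. rewrite minEle; case: ifP => h; [|move/negbT: h; rewrite -ltNge => h]; split; try lra; by [left | right]. Qed.
Lemma maxP (R : realFieldType) (x y : R) :
  exists m, Num.max x y = m /\ [/\ x <= m, y <= m & (m = x \/ m = y)].
Proof. exists (Num.max x y); split=>//. rewrite maxEle; case: ifP => h; [|move/negbT: h; rewrite -ltNge => h]; split; try lra; by [left | right]. Qed.

Ltac mm1 x y :=
  let m := fresh "m" in let hm := fresh "hm" in let h1 := fresh "h" in let h2 := fresh "h" in let h3 := fresh "h" in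
  destruct (@minP _ x y) as [m [hm [h1 h2 h3]]]; rewrite hm; clear hm; destruct h3 as [h3|h3]; try (exfalso; lra).
Ltac mm2 x y :=
  let m := fresh "m" in let hm := fresh "hm" in let h1 := fresh "h" in let h2 := fresh "h" in let h3 := fresh "h" in
  destruct (@maxP _ x y) as [m [hm [h1 h2 h3]]]; rewrite hm; clear hm; destruct h3 as [h3|h3]; try (exfalso; lra).
Ltac noMM t := lazymatch t with
  | context [Num.max _ _] => fail
  | context [Num.min _ _] => fail
  | _ => idtac end.
Ltac mm := repeat match goal with
 | |- context [Num.min ?x ?y] => noMM x; noMM y; mm1 x y
 | |- context [Num.max ?x ?y] => noMM x; noMM y; mm2 x y
 end.

Section OV.
Variable R : realFieldType.
Definition cl (c d x : R) := Num.min (Num.max x c) d.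

Lemma cl_mono c d x y : x <= y -> cl c d x <= cl c d y.
Proof. move=> h; rewrite /cl; mm; lra. Qed.
Lemma cl_cat c d e x : c <= d -> d <= e -> cl c d x + cl d e x = cl c e x + d.
Proof. move=> h1 h2; rewrite /cl; mm; lra. Qed.
Lemma cl_in c d x : c <= x -> x <= d -> cl c d x = x.
Proof. move=> h1 h2; rewrite /cl; mm; lra. Qed.
Lemma cl_lo c d x : c <= d -> x <= c -> cl c d x = c.
Proof. move=> h1 h2; rewrite /cl; mm; lra. Qed.
Lemma cl_hi c d x : c <= d -> d <= x -> cl c d x = d.
Proof. move=> h1 h2; rewrite /cl; mm; lra. Qed.
Lemma cl_ge c d x : c <= d -> c <= cl c d x.
Proof. move=> h1; rewrite /cl; mm; lra. Qed.
Lemma cl_le c d x : cl c d x <= d.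
Proof. rewrite /cl; mm; lra. Qed.
Lemma cl_lex c d x : c <= x -> cl c d x <= x.
Proof. move=> h1; rewrite /cl; mm; lra. Qed.
Lemma cl_gex c d x : x <= d -> x <= cl c d x.
Proof. move=> h1; rewrite /cl; mm; lra. Qed.
Lemma cl_lip c d x y : x <= y -> cl c d y - cl c d x <= y - x.
Proof. move=> h; rewrite /cl; mm; lra. Qed.
End OV.
Arguments cl {R}.

Lemma sum_pair (R : realFieldType) (A B : finType) (F : A * B -> R) :
  \sum_(w : A * B) F w = \sum_(a : A) \sum_(b : B) F (a, b).
Proof. by rewrite pair_bigA; apply: eq_bigr => -[]. Qed.
Definition allw {R : realFieldType} (F : world -> R) : R :=
  F (true, true, true, true, true, true)
  + F (true, true, true, true, true, false)
  + F (true, true, true, true, false, true)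
  + F (true, true, true, true, false, false)
  + F (true, true, true, false, true, true)
  + F (true, true, true, false, true, false)
  + F (true, true, true, false, false, true)
  + F (true, true, true, false, false, false)
  + F (true, true, false, true, true, true)
  + F (true, true, false, true, true, false)
  + F (true, true, false, true, false, true)
  + F (true, true, false, true, false, false)
  + F (true, true, false, false, true, true)
  + F (true, true, false, false, true, false)
  + F (true, true, false, false, false, true)
  + F (true, true, false, false, false, false)
  + F (true, false, true, true, true, true)
  + F (true, false, true, true, true, false)
  + F (true, false, true, true, false, true)
  + F (true, false, true, true, false, false)
  + F (true, false, true, false, true, true)
  + F (true, false, true, false, true, false)
  + F (true, false, true, false, false, true)
  + F (true, false, true, false, false, false)
  + F (true, false, false, true, true, true)
  + F (true, false, false, true, true, false)
  + F (true, false, false, true, false, true)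
  + F (true, false, false, true, false, false)
  + F (true, false, false, false, true, true)
  + F (true, false, false, false, true, false)
  + F (true, false, false, false, false, true)
  + F (true, false, false, false, false, false)
  + F (false, true, true, true, true, true)
  + F (false, true, true, true, true, false)
  + F (false, true, true, true, false, true)
  + F (false, true, true, true, false, false)
  + F (false, true, true, false, true, true)
  + F (false, true, true, false, true, false)
  + F (false, true, true, false, false, true)
  + F (false, true, true, false, false, false)
  + F (false, true, false, true, true, true)
  + F (false, true, false, true, true, false)
  + F (false, true, false, true, false, true)
  + F (false, true, false, true, false, false)
  + F (false, true, false, false, true, true)
  + F (false, true, false, false, true, false)
  + F (false, true, false, false, false, true)
  + F (false, true, false, false, false, false)
  + F (false, false, true, true, true, true)
  + F (false, false, true, true, true, false)
  + F (false, false, true, true, false, true)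
  + F (false, false, true, true, false, false)
  + F (false, false, true, false, true, true)
  + F (false, false, true, false, true, false)
  + F (false, false, true, false, false, true)
  + F (false, false, true, false, false, false)
  + F (false, false, false, true, true, true)
  + F (false, false, false, true, true, false)
  + F (false, false, false, true, false, true)
  + F (false, false, false, true, false, false)
  + F (false, false, false, false, true, true)
  + F (false, false, false, false, true, false)
  + F (false, false, false, false, false, true)
  + F (false, false, false, false, false, false).
Lemma sum_world (R : realFieldType) (F : world -> R) : \sum_(w : world) F w = allw F.
Proof. rewrite !sum_pair !big_bool /allw /=. lra. Qed.
Lemma sum_worldP (R : realFieldType) (P : pred world) (F : world -> R) :
  \sum_(w : world | P w) F w = allw (fun w => if P w then F w else 0).
Proof. by rewrite big_mkcond sum_world. Qed.

Section Proj.
Variable R : realFieldType.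
Definition qof (p : world -> R) (y0 s0 y1 s1 : bool) : R :=
  \sum_(w | [&& YT false w == y0, Spot false w == s0, YT true w == y1 & Spot true w == s1]) p w.
Definition rowq (q : bool -> bool -> bool -> bool -> R) y s :=
  q y s false false + q y s false true + q y s true false + q y s true true.
Definition colq (q : bool -> bool -> bool -> bool -> R) y s :=
  q false false y s + q false true y s + q true false y s + q true true y s.

Lemma proj_obs p t y s :
  \sum_(w | (YT t w == y) && (Spot t w == s)) p w =
  if t then colq (qof p) y s else rowq (qof p) y s.
Proof.
rewrite /colq /rowq /qof; case: t; case: y; case: s;
rewrite !sum_worldP /allw /=; ring.
Qed.
Lemma proj_TS p : HR_TS p = qof p false true false false + qof p false true true false
  + qof p true true false false + qof p true true true false.
Proof. rewrite /HR_TS /qof !sum_worldP /allw /=; ring. Qed.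
Lemma proj_TY p : HR_TY p = qof p true false false false + qof p true false false true
  + qof p true true false false + qof p true true false true.
Proof. rewrite /HR_TY /qof !sum_worldP /allw /=; ring. Qed.
Lemma proj_tot p : \sum_w p w = rowq (qof p) false false + rowq (qof p) false true
  + rowq (qof p) true false + rowq (qof p) true true.
Proof. rewrite /rowq /qof !sum_worldP /allw /=; ring. Qed.
Lemma proj_ge0 p : (forall w, 0 <= p w) -> forall a b c d, 0 <= qof p a b c d.
Proof. by move=> h a b c d; apply: sumr_ge0 => w _. Qed.
End Proj.
Arguments qof {R} p y0 s0 y1 s1.
Arguments rowq {R} q y s.
Arguments colq {R} q y s.

Lemma valid (R : realFieldType) (obs : bool -> bool -> bool -> R) c1 c2 p :
  admissible obs c1 c2 p -> lowerL obs c1 <= HR_TY p <= upperU obs c1.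
Proof.
case=> [[p0 p1] hc hts _].
have c := fun t y s => hc t y s.
move: (c false false false) (c false false true) (c false true false) (c false true true)
      (c true false false) (c true false true) (c true true false) (c true true true).
rewrite !proj_obs /= /rowq /colq.
move: hts; rewrite proj_TY proj_TS.
have q0 := @proj_ge0 _ _ p0.
move: p1; rewrite proj_tot /rowq.
move: (q0 false false false false) (q0 false false false true) (q0 false false true false) (q0 false false true true)
 (q0 false true false false) (q0 false true false true) (q0 false true true false) (q0 false true true true)
 (q0 true false false false) (q0 true false false true) (q0 true false true false) (q0 true false true true)
 (q0 true true false false) (q0 true true false true) (q0 true true true false) (q0 true true true true).
move=> *.
rewrite /lowerL /upperU /PY ge_max le_min !ge_max !le_min.
apply/andP; split; apply/andP; split; apply/andP; split; lra.
Qed.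

Definition liftp {R : realFieldType} (q : bool -> bool -> bool -> bool -> R) (w : world) : R :=
  let: (s0, s1, y00, y01, y10, y11) := w in
  if (y00 == y01) && (y10 == y11) then
    q (if s0 then y01 else y00) s0 (if s1 then y11 else y10) s1 else 0.

Lemma qof_lift (R : realFieldType) (q : bool -> bool -> bool -> bool -> R) a b c d :
  qof (liftp q) a b c d = q a b c d.
Proof. rewrite /qof sum_worldP /allw /=; case: a; case: b; case: c; case: d => /=; ring. Qed.

Lemma lift_ok (R : realFieldType) (obs : bool -> bool -> bool -> R) c1 c2
  (q : bool -> bool -> bool -> bool -> R) :
  (forall a b c d, 0 <= q a b c d) ->
  (forall y s, rowq q y s = obs false y s) ->
  (forall y s, colq q y s = obs true y s) ->
  rowq q false false + rowq q false true + rowq q true false + rowq q true true = 1 ->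
  q false true false false + q false true true false + q true true false false + q true true true false <= c1 ->
  0 <= c2 ->
  admissible obs c1 c2 (liftp q) /\
  HR_TY (liftp q) = q true false false false + q true false false true
     + q true true false false + q true true false true.
Proof.
move=> q0 hr hc ht hb hc2.
split; last by rewrite proj_TY !qof_lift.
split.
- split.
  + move=> [[[[[s0 s1] y00] y01] y10] y11] /=; case: ifP => _ //; exact: q0.
  + by rewrite proj_tot /rowq !qof_lift -ht /rowq.
- move=> t y s; rewrite proj_obs; case: t; [rewrite -hc /colq | rewrite -hr /rowq]; by rewrite !qof_lift.
- by rewrite proj_TS !qof_lift.
- move=> t; rewrite /HR_SY sum_worldP /allw /=; case: t => /=; lra.
Qed.

Section NW.
Variable R : realFieldType.
Fixpoint cutf (s : seq R) k := if k is k'.+1 then cutf s k' + s`_k' else 0.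
Definition cell (s t : seq R) i j :=
  cl (cutf t j) (cutf t j.+1) (cutf s i.+1) - cl (cutf t j) (cutf t j.+1) (cutf s i).

Variables (s t : seq R).
Hypothesis s0 : forall k, 0 <= s`_k.
Hypothesis t0 : forall k, 0 <= t`_k.

Lemma cutf_mono (u : seq R) : (forall k, 0 <= u`_k) -> forall k m, (k <= m)%N -> cutf u k <= cutf u m.
Proof.
move=> u0 k m; elim: m => [|m IH]; first by rewrite leqn0 => /eqP ->.
rewrite leq_eqVlt => /orP [/eqP -> //| ]; rewrite ltnS => /IH h /=.
have := u0 m; lra.
Qed.
Lemma cutS (u : seq R) k : cutf u k.+1 = cutf u k + u`_k.
Proof. by []. Qed.

Lemma cell_ge0 i j : 0 <= cell s t i j.
Proof.
rewrite /cell subr_ge0; apply: cl_mono; rewrite cutS; have := s0 i; lra.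
Qed.
Lemma cell_z1 i j : cutf s i.+1 <= cutf t j -> cell s t i j = 0.
Proof.
move=> h; have hs := s0 i; have ht := t0 j; rewrite /cell !cutS in h *.
rewrite (@cl_lo _ _ _ (cutf s i + s`_i)) ?(@cl_lo _ _ _ (cutf s i)); lra.
Qed.
Lemma cell_z2 i j : cutf t j.+1 <= cutf s i -> cell s t i j = 0.
Proof.
move=> h; have hs := s0 i; have ht := t0 j; rewrite /cell !cutS in h *.
rewrite (@cl_hi _ _ _ (cutf s i + s`_i)) ?(@cl_hi _ _ _ (cutf s i)); lra.
Qed.
Lemma cell_fullc i j : cutf s i <= cutf t j -> cutf t j.+1 <= cutf s i.+1 -> cell s t i j = t`_j.
Proof.
move=> h1 h2; have hs := s0 i; have ht := t0 j; rewrite /cell !cutS in h1 h2 *.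
rewrite (@cl_hi _ _ _ (cutf s i + s`_i)) ?(@cl_lo _ _ _ (cutf s i)); lra.
Qed.
Lemma cell_pair_le i j : cutf t j <= cutf s i.+2 ->
  cell s t i j + cell s t i.+1 j <= cutf s i.+2 - cutf t j.
Proof.
move=> h; have ht := t0 j; rewrite /cell.
have h1 := @cl_lex _ (cutf t j) (cutf t j.+1) (cutf s i.+2) h.
have h2 := @cl_ge _ (cutf t j) (cutf t j.+1) (cutf s i).
rewrite cutS in h2; lra.
Qed.

Hypothesis tot : cutf s 6 = cutf t 4.

Lemma row_sum i : (i < 6)%N -> cell s t i 0 + cell s t i 1 + cell s t i 2 + cell s t i 3 = s`_i.
Proof.
move=> hi.
have m01 := t0 0; have m12 := t0 1; have m23 := t0 2; have m34 := t0 3.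
have c01 : cutf t 0 <= cutf t 1 by rewrite cutS; lra.
have c12 : cutf t 1 <= cutf t 2 by rewrite (cutS t 1); lra.
have c23 : cutf t 2 <= cutf t 3 by rewrite (cutS t 2); lra.
have c34 : cutf t 3 <= cutf t 4 by rewrite (cutS t 3); lra.
have E x : cl (cutf t 0) (cutf t 1) x + cl (cutf t 1) (cutf t 2) x + cl (cutf t 2) (cutf t 3) x
   + cl (cutf t 3) (cutf t 4) x = cl (cutf t 0) (cutf t 4) x + cutf t 1 + cutf t 2 + cutf t 3.
  have := @cl_cat _ _ _ _ x c01 c12.
  have := @cl_cat _ _ _ _ x (le_trans c01 c12) c23.
  have := @cl_cat _ _ _ _ x (le_trans (le_trans c01 c12) c23) c34.
  lra.
have Ei := E (cutf s i); have Ei1 := E (cutf s i.+1).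
have a0 : 0 <= cutf s i := @cutf_mono s s0 _ _ (leq0n i).
have a1 : cutf s i.+1 <= cutf s 6 := @cutf_mono s s0 _ _ hi.
have a2 := s0 i. have z0 : cutf t 0 = 0 by []. have a3 : cutf s i.+1 <= cutf t 4 by rewrite -tot. have a4 := cutS s i.
rewrite (@cl_in _ (cutf t 0) (cutf t 4) (cutf s i)) in Ei; try lra.
rewrite (@cl_in _ (cutf t 0) (cutf t 4) (cutf s i.+1)) in Ei1; try lra.
have := cutS s i; rewrite /cell; try lra.
Qed.
Lemma col_sum j : (j < 4)%N ->
  cell s t 0 j + cell s t 1 j + cell s t 2 j + cell s t 3 j + cell s t 4 j + cell s t 5 j = t`_j.
Proof.
move=> hj; rewrite /cell.
have b0 : 0 <= cutf t j := @cutf_mono t t0 _ _ (leq0n j).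
have b1 : cutf t j.+1 <= cutf t 4 := @cutf_mono t t0 _ _ hj.
have b2 := t0 j. have b3 := cutS t j.
rewrite (@cl_hi _ (cutf t j) (cutf t j.+1) (cutf s 6)) ?tot; try lra.
rewrite (@cl_lo _ (cutf t j) (cutf t j.+1) (cutf s 0)) /=; lra.
Qed.
End NW.

Arguments cell {R} s t i j : simpl never.
Arguments cutf {R} s k.

Definition code (y s : bool) : nat := (2 * y + s)%N.
Definition sum4 {R : realFieldType} (g : nat -> R) := g 0%N + g 1%N + g 2%N + g 3%N.
Definition sum6 {R : realFieldType} (g : nat -> R) := g 0%N + g 1%N + g 2%N + g 3%N + g 4%N + g 5%N.
Definition nwq {R : realFieldType} (s t : seq R) (rl cl : seq nat) (y0 s0 y1 s1 : bool) : R :=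
  sum6 (fun i => sum4 (fun j =>
    if (nth 0%N rl i == code y0 s0) && (nth 0%N cl j == code y1 s1) then cell s t i j else 0)).

Lemma nwq_ge0 (R : realFieldType) (s t : seq R) rl cl :
  (forall k, 0 <= s`_k) -> (forall k, 0 <= t`_k) -> forall a b c d, 0 <= nwq s t rl cl a b c d.
Proof.
move=> s0 t0 a b c d; rewrite /nwq /sum6 /sum4.
repeat apply: addr_ge0; case: ifP => _ //; exact: cell_ge0.
Qed.

Lemma knum (R : realFieldType) (x00 x01 x10 x11 z00 z01 z10 z11 c1 L : R) :
  0 <= x00 -> 0 <= x01 -> 0 <= x10 -> 0 <= x11 ->
  0 <= z00 -> 0 <= z01 -> 0 <= z10 -> 0 <= z11 -> 0 <= c1 ->
  x01 + x11 - z01 - z11 <= c1 -> 0 <= L -> x11 - z11 - c1 <= L ->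
  (x10 + x11) - (z10 + z11) <= L -> z00 - x00 - c1 <= L ->
  x00 + x01 + x10 + x11 = 1 -> z00 + z01 + z10 + z11 = 1 ->
  exists k0 k1, [/\ 0 <= k0 <= x01, 0 <= k1 <= x11, k0 + k1 <= c1,
     x01 + x11 - z01 - z11 <= k0 + k1 & x11 - k1 - z11 <= L /\ z00 - x00 - k0 <= L].
Proof.
move=> *.
have [e2 [_ [? ? he2]]] := @maxP _ 0 (x11 - z11 - L).
have [e4 [_ [? ? he4]]] := @maxP _ 0 (z00 - x00 - L).
have [K [_ [? ? hK]]] := @maxP _ (x01 + x11 - z01 - z11) (e2 + e4).
have [k1 [_ [? ? hk1]]] := @maxP _ e2 (K - x01).
exists (K - k1), k1.
have hKc : K <= c1 by case: hK => ?; case: he2 => ?; case: he4 => ?; lra.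
have hKs : K <= x01 + x11 by case: hK => ?; case: he2 => ?; case: he4 => ?; lra.
have he2' : e2 <= x11 by case: he2 => ->; lra.
have he4' : e4 <= x01 by case: he4 => ->; lra.
split.
- apply/andP; split; [case: hk1 => ?; lra | lra].
- apply/andP; split; [lra | case: hk1 => ?; lra].
- lra.
- lra.
- split; [lra | case: hk1 => ?; lra].
Qed.

Arguments cell {R} s t i j : simpl never.
Arguments cutf {R} s k.

Definition goodq {R : realFieldType} (x00 x01 x10 x11 z00 z01 z10 z11 c1 L : R)
  (q : bool -> bool -> bool -> bool -> R) :=
 [/\ forall a b c d, 0 <= q a b c d,
  [/\ rowq q false false = x00, rowq q false true = x01, rowq q true false = x10 & rowq q true true = x11],
  [/\ colq q false false = z00, colq q false true = z01, colq q true false = z10 & colq q true true = z11],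
  q false true false false + q false true true false + q true true false false + q true true true false <= c1 &
  q true false false false + q true false false true + q true true false false + q true true false true <= L].

Lemma case_gt (R : realFieldType) (x00 x01 x10 x11 z00 z01 z10 z11 c1 L k0 k1 : R) :
  0 <= x00 -> 0 <= x01 -> 0 <= x10 -> 0 <= x11 ->
  0 <= z00 -> 0 <= z01 -> 0 <= z10 -> 0 <= z11 ->
  x00 + x01 + x10 + x11 = 1 -> z00 + z01 + z10 + z11 = 1 ->
  0 <= k0 -> k0 <= x01 -> 0 <= k1 -> k1 <= x11 ->
  k0 + k1 <= c1 -> x01 + x11 - z01 - z11 <= k0 + k1 ->
  x11 - k1 - z11 <= L -> z00 - x00 - k0 <= L ->
  (x10 + x11) - (z10 + z11) <= L -> 0 <= L ->
  z11 < x11 - k1 -> exists q, goodq x00 x01 x10 x11 z00 z01 z10 z11 c1 L q.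
Proof.
move=> hx00 hx01 hx10 hx11 hz00 hz01 hz10 hz11 hxs hzs hk0 hk0' hk1 hk1' hkc hD hL2 hL4 hL3 hL1 hc.
have [s es] : {s : seq R | s = [:: x11 - k1; x01 - k0; x00; k0; x10; k1]} by eexists.
have [t et] : {t : seq R | t = [:: z11; z01; z00; z10]} by eexists.
have s0 : forall k, 0 <= s`_k by case=> [|[|[|[|[|[|k]]]]]]; rewrite es /= ?nth_nil; lra.
have t0 : forall k, 0 <= t`_k by case=> [|[|[|[|k]]]]; rewrite et /= ?nth_nil; lra.
have tot : cutf s 6 = cutf t 4 by rewrite es et /=; lra.
have g := @cell_ge0 _ s t s0.
have z02 : cell s t 0 2 = 0 by apply: (@cell_z1 _ s t s0 t0); rewrite es et /= ?add0r; lra.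
have z03 : cell s t 0 3 = 0 by apply: (@cell_z1 _ s t s0 t0); rewrite es et /= ?add0r; lra.
have z12 : cell s t 1 2 = 0 by apply: (@cell_z1 _ s t s0 t0); rewrite es et /= ?add0r; lra.
have z13 : cell s t 1 3 = 0 by apply: (@cell_z1 _ s t s0 t0); rewrite es et /= ?add0r; lra.
have w10 : cell s t 1 0 = 0 by apply: (@cell_z2 _ s t s0 t0); rewrite es et /= ?add0r; lra.
have w20 : cell s t 2 0 = 0 by apply: (@cell_z2 _ s t s0 t0); rewrite es et /= ?add0r; lra.
have w30 : cell s t 3 0 = 0 by apply: (@cell_z2 _ s t s0 t0); rewrite es et /= ?add0r; lra.
have z40' : cell s t 4 0 = 0 by apply: (@cell_z2 _ s t s0 t0); rewrite es et /= ?add0r; lra.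
have z50' : cell s t 5 0 = 0 by apply: (@cell_z2 _ s t s0 t0); rewrite es et /= ?add0r; lra.
have z23 : z10 <= x10 + k1 -> cell s t 2 3 = 0 by move=> hz; apply: (@cell_z1 _ s t s0 t0); rewrite es et /= ?add0r; lra.
have z33 : z10 <= x10 + k1 -> cell s t 3 3 = 0 by move=> hz; apply: (@cell_z1 _ s t s0 t0); rewrite es et /= ?add0r; lra.
have z40 : x10 + k1 < z10 -> cell s t 4 0 = 0 by move=> hz; apply: (@cell_z2 _ s t s0 t0); rewrite es et /= ?add0r; lra.
have z41 : x10 + k1 < z10 -> cell s t 4 1 = 0 by move=> hz; apply: (@cell_z2 _ s t s0 t0); rewrite es et /= ?add0r; lra.
have z42 : x10 + k1 < z10 -> cell s t 4 2 = 0 by move=> hz; apply: (@cell_z2 _ s t s0 t0); rewrite es et /= ?add0r; lra.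
have z50 : x10 + k1 < z10 -> cell s t 5 0 = 0 by move=> hz; apply: (@cell_z2 _ s t s0 t0); rewrite es et /= ?add0r; lra.
have z51 : x10 + k1 < z10 -> cell s t 5 1 = 0 by move=> hz; apply: (@cell_z2 _ s t s0 t0); rewrite es et /= ?add0r; lra.
have z52 : x10 + k1 < z10 -> cell s t 5 2 = 0 by move=> hz; apply: (@cell_z2 _ s t s0 t0); rewrite es et /= ?add0r; lra.
have r0 : cell s t 0 0 + cell s t 0 1 + cell s t 0 2 + cell s t 0 3 = x11 - k1 by rewrite (@row_sum _ s t s0 t0 tot 0 isT) es.
have r1 : cell s t 1 0 + cell s t 1 1 + cell s t 1 2 + cell s t 1 3 = x01 - k0 by rewrite (@row_sum _ s t s0 t0 tot 1 isT) es.
have r2 : cell s t 2 0 + cell s t 2 1 + cell s t 2 2 + cell s t 2 3 = x00 by rewrite (@row_sum _ s t s0 t0 tot 2 isT) es.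
have r3 : cell s t 3 0 + cell s t 3 1 + cell s t 3 2 + cell s t 3 3 = k0 by rewrite (@row_sum _ s t s0 t0 tot 3 isT) es.
have r4 : cell s t 4 0 + cell s t 4 1 + cell s t 4 2 + cell s t 4 3 = x10 by rewrite (@row_sum _ s t s0 t0 tot 4 isT) es.
have r5 : cell s t 5 0 + cell s t 5 1 + cell s t 5 2 + cell s t 5 3 = k1 by rewrite (@row_sum _ s t s0 t0 tot 5 isT) es.
have cc0 : cell s t 0 0 + cell s t 1 0 + cell s t 2 0 + cell s t 3 0 + cell s t 4 0 + cell s t 5 0 = z11 by rewrite (@col_sum _ s t t0 tot 0 isT) et.
have cc1 : cell s t 0 1 + cell s t 1 1 + cell s t 2 1 + cell s t 3 1 + cell s t 4 1 + cell s t 5 1 = z01 by rewrite (@col_sum _ s t t0 tot 1 isT) et.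
have cc2 : cell s t 0 2 + cell s t 1 2 + cell s t 2 2 + cell s t 3 2 + cell s t 4 2 + cell s t 5 2 = z00 by rewrite (@col_sum _ s t t0 tot 2 isT) et.
have cc3 : cell s t 0 3 + cell s t 1 3 + cell s t 2 3 + cell s t 3 3 + cell s t 4 3 + cell s t 5 3 = z10 by rewrite (@col_sum _ s t t0 tot 3 isT) et.
have hbad : cell s t 0 1 + cell s t 0 2 + cell s t 4 1 + cell s t 4 2 + cell s t 5 1 + cell s t 5 2 <= L.
  move: (g 0 3) (g 4 0) (g 5 0) (g 1 3) (g 2 3) (g 3 3) => *.
  case: (leP z10 (x10 + k1)) => hz.
  - move: (z23 hz) (z33 hz) => *; lra.
  - move: (z40 hz) (z41 hz) (z42 hz) (z50 hz) (z51 hz) (z52 hz) => *; lra.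
have s0' := s0; have t0' := t0.
exists (nwq s t [:: 3; 1; 0; 1; 2; 3]%N [:: 3; 1; 0; 2]%N).
clear es et s0 t0 tot hx00 hx01 hx10 hx11 hz00 hz01 hz10 hz11 hk0 hk0' hk1 hk1'.
split.
- exact: (@nwq_ge0 _ s t _ _ s0' t0').
- rewrite /rowq /nwq /sum6 /sum4 /=; split; lra.
- rewrite /colq /nwq /sum6 /sum4 /=; split; lra.
- rewrite /nwq /sum6 /sum4 /=; move: (g 3 0) (g 3 1) (g 5 0) (g 5 1) (g 3 2) (g 3 3) (g 5 2) (g 5 3) => *; lra.
- rewrite /nwq /sum6 /sum4 /=; lra.
Qed.

Arguments cell {R} s t i j : simpl never.
Arguments cutf {R} s k.


Lemma case_le1 (R : realFieldType) (x00 x01 x10 x11 z00 z01 z10 z11 c1 L k0 k1 : R) :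
  0 <= x00 -> 0 <= x01 -> 0 <= x10 -> 0 <= x11 ->
  0 <= z00 -> 0 <= z01 -> 0 <= z10 -> 0 <= z11 ->
  x00 + x01 + x10 + x11 = 1 -> z00 + z01 + z10 + z11 = 1 ->
  0 <= k0 -> k0 <= x01 -> 0 <= k1 -> k1 <= x11 ->
  k0 + k1 <= c1 -> x01 + x11 - z01 - z11 <= k0 + k1 ->
  x11 - k1 - z11 <= L -> z00 - x00 - k0 <= L ->
  (x10 + x11) - (z10 + z11) <= L -> 0 <= L ->
  x11 - k1 <= z11 -> x01 - k0 <= z01 -> exists q, goodq x00 x01 x10 x11 z00 z01 z10 z11 c1 L q.
Proof.
move=> hx00 hx01 hx10 hx11 hz00 hz01 hz10 hz11 hxs hzs hk0 hk0' hk1 hk1' hkc hD hL2 hL4 hL3 hL1 hc hc'.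
have [s es] : {s : seq R | s = [:: x11 - k1; x10; k1; x00; k0; x01 - k0]} by eexists.
have [t et] : {t : seq R | t = [:: z11; z10; z00; z01]} by eexists.
have s0 : forall k, 0 <= s`_k by case=> [|[|[|[|[|[|k]]]]]]; rewrite es /= ?nth_nil; lra.
have t0 : forall k, 0 <= t`_k by case=> [|[|[|[|k]]]]; rewrite et /= ?nth_nil; lra.
have tot : cutf s 6 = cutf t 4 by rewrite es et /=; lra.
have g := @cell_ge0 _ s t s0.
have w01 : cell s t 0 1 = 0 by apply: (@cell_z1 _ s t s0 t0); rewrite es et /= ?add0r; lra.
have w02 : cell s t 0 2 = 0 by apply: (@cell_z1 _ s t s0 t0); rewrite es et /= ?add0r; lra.
have w51 : cell s t 5 1 = 0 by apply: (@cell_z2 _ s t s0 t0); rewrite es et /= ?add0r; lra.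
have w52 : cell s t 5 2 = 0 by apply: (@cell_z2 _ s t s0 t0); rewrite es et /= ?add0r; lra.
have a03 : x10 + x11 <= z10 + z11 -> cell s t 0 3 = 0 by move=> hz; apply: (@cell_z1 _ s t s0 t0); rewrite es et /= ?add0r; lra.
have a12 : x10 + x11 <= z10 + z11 -> cell s t 1 2 = 0 by move=> hz; apply: (@cell_z1 _ s t s0 t0); rewrite es et /= ?add0r; lra.
have a13 : x10 + x11 <= z10 + z11 -> cell s t 1 3 = 0 by move=> hz; apply: (@cell_z1 _ s t s0 t0); rewrite es et /= ?add0r; lra.
have a22 : x10 + x11 <= z10 + z11 -> cell s t 2 2 = 0 by move=> hz; apply: (@cell_z1 _ s t s0 t0); rewrite es et /= ?add0r; lra.
have a23 : x10 + x11 <= z10 + z11 -> cell s t 2 3 = 0 by move=> hz; apply: (@cell_z1 _ s t s0 t0); rewrite es et /= ?add0r; lra.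
have b30 : z10 + z11 < x10 + x11 -> cell s t 3 0 = 0 by move=> hz; apply: (@cell_z2 _ s t s0 t0); rewrite es et /= ?add0r; lra.
have b31 : z10 + z11 < x10 + x11 -> cell s t 3 1 = 0 by move=> hz; apply: (@cell_z2 _ s t s0 t0); rewrite es et /= ?add0r; lra.
have b40 : z10 + z11 < x10 + x11 -> cell s t 4 0 = 0 by move=> hz; apply: (@cell_z2 _ s t s0 t0); rewrite es et /= ?add0r; lra.
have b41 : z10 + z11 < x10 + x11 -> cell s t 4 1 = 0 by move=> hz; apply: (@cell_z2 _ s t s0 t0); rewrite es et /= ?add0r; lra.
have b50 : z10 + z11 < x10 + x11 -> cell s t 5 0 = 0 by move=> hz; apply: (@cell_z2 _ s t s0 t0); rewrite es et /= ?add0r; lra.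
have b51 : z10 + z11 < x10 + x11 -> cell s t 5 1 = 0 by move=> hz; apply: (@cell_z2 _ s t s0 t0); rewrite es et /= ?add0r; lra.
have r0 : cell s t 0 0 + cell s t 0 1 + cell s t 0 2 + cell s t 0 3 = x11 - k1 by rewrite (@row_sum _ s t s0 t0 tot 0 isT) es.
have r1 : cell s t 1 0 + cell s t 1 1 + cell s t 1 2 + cell s t 1 3 = x10 by rewrite (@row_sum _ s t s0 t0 tot 1 isT) es.
have r2 : cell s t 2 0 + cell s t 2 1 + cell s t 2 2 + cell s t 2 3 = k1 by rewrite (@row_sum _ s t s0 t0 tot 2 isT) es.
have r3 : cell s t 3 0 + cell s t 3 1 + cell s t 3 2 + cell s t 3 3 = x00 by rewrite (@row_sum _ s t s0 t0 tot 3 isT) es.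
have r4 : cell s t 4 0 + cell s t 4 1 + cell s t 4 2 + cell s t 4 3 = k0 by rewrite (@row_sum _ s t s0 t0 tot 4 isT) es.
have r5 : cell s t 5 0 + cell s t 5 1 + cell s t 5 2 + cell s t 5 3 = x01 - k0 by rewrite (@row_sum _ s t s0 t0 tot 5 isT) es.
have cc0 : cell s t 0 0 + cell s t 1 0 + cell s t 2 0 + cell s t 3 0 + cell s t 4 0 + cell s t 5 0 = z11 by rewrite (@col_sum _ s t t0 tot 0 isT) et.
have cc1 : cell s t 0 1 + cell s t 1 1 + cell s t 2 1 + cell s t 3 1 + cell s t 4 1 + cell s t 5 1 = z10 by rewrite (@col_sum _ s t t0 tot 1 isT) et.
have cc2 : cell s t 0 2 + cell s t 1 2 + cell s t 2 2 + cell s t 3 2 + cell s t 4 2 + cell s t 5 2 = z00 by rewrite (@col_sum _ s t t0 tot 2 isT) et.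
have cc3 : cell s t 0 3 + cell s t 1 3 + cell s t 2 3 + cell s t 3 3 + cell s t 4 3 + cell s t 5 3 = z01 by rewrite (@col_sum _ s t t0 tot 3 isT) et.
have hbad : cell s t 0 2 + cell s t 0 3 + cell s t 1 2 + cell s t 1 3 + cell s t 2 2 + cell s t 2 3 <= L.
  case: (leP (x10 + x11) (z10 + z11)) => hz.
  - move: (a03 hz) (a12 hz) (a13 hz) (a22 hz) (a23 hz) => *; lra.
  - move: (b30 hz) (b31 hz) (b40 hz) (b41 hz) (b50 hz) (b51 hz) => *; lra.
have s0' := s0; have t0' := t0.
exists (nwq s t [:: 3; 2; 3; 0; 1; 1]%N [:: 3; 2; 0; 1]%N).
clear es et s0 t0 tot hx00 hx01 hx10 hx11 hz00 hz01 hz10 hz11 hk0 hk0' hk1 hk1'.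
split.
- exact: (@nwq_ge0 _ s t _ _ s0' t0').
- rewrite /rowq /nwq /sum6 /sum4 /=; split; lra.
- rewrite /colq /nwq /sum6 /sum4 /=; split; lra.
- rewrite /nwq /sum6 /sum4 /=; move: (g 2 0) (g 2 3) (g 4 0) (g 4 3) => *; lra.
- rewrite /nwq /sum6 /sum4 /=; lra.
Qed.

Lemma case_le2 (R : realFieldType) (x00 x01 x10 x11 z00 z01 z10 z11 c1 L k0 k1 : R) :
  0 <= x00 -> 0 <= x01 -> 0 <= x10 -> 0 <= x11 ->
  0 <= z00 -> 0 <= z01 -> 0 <= z10 -> 0 <= z11 ->
  x00 + x01 + x10 + x11 = 1 -> z00 + z01 + z10 + z11 = 1 ->
  0 <= k0 -> k0 <= x01 -> 0 <= k1 -> k1 <= x11 ->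
  k0 + k1 <= c1 -> x01 + x11 - z01 - z11 <= k0 + k1 ->
  x11 - k1 - z11 <= L -> z00 - x00 - k0 <= L ->
  (x10 + x11) - (z10 + z11) <= L -> 0 <= L ->
  x11 - k1 <= z11 -> z01 < x01 - k0 -> exists q, goodq x00 x01 x10 x11 z00 z01 z10 z11 c1 L q.
Proof.
move=> hx00 hx01 hx10 hx11 hz00 hz01 hz10 hz11 hxs hzs hk0 hk0' hk1 hk1' hkc hD hL2 hL4 hL3 hL1 hc hc'.
have [s es] : {s : seq R | s = [:: x01 - k0; x11 - k1; x10; k1; x00; k0]} by eexists.
have [t et] : {t : seq R | t = [:: z01; z11; z10; z00]} by eexists.
have s0 : forall k, 0 <= s`_k by case=> [|[|[|[|[|[|k]]]]]]; rewrite es /= ?nth_nil; lra.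
have t0 : forall k, 0 <= t`_k by case=> [|[|[|[|k]]]]; rewrite et /= ?nth_nil; lra.
have tot : cutf s 6 = cutf t 4 by rewrite es et /=; lra.
have g := @cell_ge0 _ s t s0.
have w02 : cell s t 0 2 = 0 by apply: (@cell_z1 _ s t s0 t0); rewrite es et /= ?add0r; lra.
have w03 : cell s t 0 3 = 0 by apply: (@cell_z1 _ s t s0 t0); rewrite es et /= ?add0r; lra.
have w12 : cell s t 1 2 = 0 by apply: (@cell_z1 _ s t s0 t0); rewrite es et /= ?add0r; lra.
have w13 : cell s t 1 3 = 0 by apply: (@cell_z1 _ s t s0 t0); rewrite es et /= ?add0r; lra.
have w10 : cell s t 1 0 = 0 by apply: (@cell_z2 _ s t s0 t0); rewrite es et /= ?add0r; lra.
have w20 : cell s t 2 0 = 0 by apply: (@cell_z2 _ s t s0 t0); rewrite es et /= ?add0r; lra.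
have w30 : cell s t 3 0 = 0 by apply: (@cell_z2 _ s t s0 t0); rewrite es et /= ?add0r; lra.
have a23 : x01 - k0 + (x11 - k1) + x10 + k1 <= z01 + z11 + z10 -> cell s t 2 3 = 0 by move=> hz; apply: (@cell_z1 _ s t s0 t0); rewrite es et /= ?add0r; lra.
have a33 : x01 - k0 + (x11 - k1) + x10 + k1 <= z01 + z11 + z10 -> cell s t 3 3 = 0 by move=> hz; apply: (@cell_z1 _ s t s0 t0); rewrite es et /= ?add0r; lra.
have b40 : z01 + z11 + z10 < x01 - k0 + (x11 - k1) + x10 + k1 -> cell s t 4 0 = 0 by move=> hz; apply: (@cell_z2 _ s t s0 t0); rewrite es et /= ?add0r; lra.
have b41 : z01 + z11 + z10 < x01 - k0 + (x11 - k1) + x10 + k1 -> cell s t 4 1 = 0 by move=> hz; apply: (@cell_z2 _ s t s0 t0); rewrite es et /= ?add0r; lra.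
have b42 : z01 + z11 + z10 < x01 - k0 + (x11 - k1) + x10 + k1 -> cell s t 4 2 = 0 by move=> hz; apply: (@cell_z2 _ s t s0 t0); rewrite es et /= ?add0r; lra.
have b50 : z01 + z11 + z10 < x01 - k0 + (x11 - k1) + x10 + k1 -> cell s t 5 0 = 0 by move=> hz; apply: (@cell_z2 _ s t s0 t0); rewrite es et /= ?add0r; lra.
have b51 : z01 + z11 + z10 < x01 - k0 + (x11 - k1) + x10 + k1 -> cell s t 5 1 = 0 by move=> hz; apply: (@cell_z2 _ s t s0 t0); rewrite es et /= ?add0r; lra.
have b52 : z01 + z11 + z10 < x01 - k0 + (x11 - k1) + x10 + k1 -> cell s t 5 2 = 0 by move=> hz; apply: (@cell_z2 _ s t s0 t0); rewrite es et /= ?add0r; lra.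
have r0 : cell s t 0 0 + cell s t 0 1 + cell s t 0 2 + cell s t 0 3 = x01 - k0 by rewrite (@row_sum _ s t s0 t0 tot 0 isT) es.
have r1 : cell s t 1 0 + cell s t 1 1 + cell s t 1 2 + cell s t 1 3 = x11 - k1 by rewrite (@row_sum _ s t s0 t0 tot 1 isT) es.
have r2 : cell s t 2 0 + cell s t 2 1 + cell s t 2 2 + cell s t 2 3 = x10 by rewrite (@row_sum _ s t s0 t0 tot 2 isT) es.
have r3 : cell s t 3 0 + cell s t 3 1 + cell s t 3 2 + cell s t 3 3 = k1 by rewrite (@row_sum _ s t s0 t0 tot 3 isT) es.
have r4 : cell s t 4 0 + cell s t 4 1 + cell s t 4 2 + cell s t 4 3 = x00 by rewrite (@row_sum _ s t s0 t0 tot 4 isT) es.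
have r5 : cell s t 5 0 + cell s t 5 1 + cell s t 5 2 + cell s t 5 3 = k0 by rewrite (@row_sum _ s t s0 t0 tot 5 isT) es.
have cc0 : cell s t 0 0 + cell s t 1 0 + cell s t 2 0 + cell s t 3 0 + cell s t 4 0 + cell s t 5 0 = z01 by rewrite (@col_sum _ s t t0 tot 0 isT) et.
have cc1 : cell s t 0 1 + cell s t 1 1 + cell s t 2 1 + cell s t 3 1 + cell s t 4 1 + cell s t 5 1 = z11 by rewrite (@col_sum _ s t t0 tot 1 isT) et.
have cc2 : cell s t 0 2 + cell s t 1 2 + cell s t 2 2 + cell s t 3 2 + cell s t 4 2 + cell s t 5 2 = z10 by rewrite (@col_sum _ s t t0 tot 2 isT) et.
have cc3 : cell s t 0 3 + cell s t 1 3 + cell s t 2 3 + cell s t 3 3 + cell s t 4 3 + cell s t 5 3 = z00 by rewrite (@col_sum _ s t t0 tot 3 isT) et.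
have hbad : cell s t 1 0 + cell s t 1 3 + cell s t 2 0 + cell s t 2 3 + cell s t 3 0 + cell s t 3 3 <= L.
  case: (leP (x01 - k0 + (x11 - k1) + x10 + k1) (z01 + z11 + z10)) => hz.
  - move: (a23 hz) (a33 hz) => *; lra.
  - move: (b40 hz) (b41 hz) (b42 hz) (b50 hz) (b51 hz) (b52 hz) => *; lra.
have s0' := s0; have t0' := t0.
exists (nwq s t [:: 1; 3; 2; 3; 0; 1]%N [:: 1; 3; 2; 0]%N).
clear es et s0 t0 tot hx00 hx01 hx10 hx11 hz00 hz01 hz10 hz11 hk0 hk0' hk1 hk1'.
split.
- exact: (@nwq_ge0 _ s t _ _ s0' t0').
- rewrite /rowq /nwq /sum6 /sum4 /=; split; lra.
- rewrite /colq /nwq /sum6 /sum4 /=; split; lra.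
- rewrite /nwq /sum6 /sum4 /=; move: (g 3 0) (g 3 1) (g 5 0) (g 5 1) => *; lra.
- rewrite /nwq /sum6 /sum4 /=; lra.
Qed.

Lemma attain (R : realFieldType) (x00 x01 x10 x11 z00 z01 z10 z11 c1 L : R) :
  0 <= x00 -> 0 <= x01 -> 0 <= x10 -> 0 <= x11 ->
  0 <= z00 -> 0 <= z01 -> 0 <= z10 -> 0 <= z11 -> 0 <= c1 ->
  x01 + x11 - z01 - z11 <= c1 -> 0 <= L -> x11 - z11 - c1 <= L ->
  (x10 + x11) - (z10 + z11) <= L -> z00 - x00 - c1 <= L ->
  x00 + x01 + x10 + x11 = 1 -> z00 + z01 + z10 + z11 = 1 ->
  exists q, goodq x00 x01 x10 x11 z00 z01 z10 z11 c1 L q.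
Proof.
move=> h1 h2 h3 h4 h5 h6 h7 h8 h9 h10 h11 h12 h13 h14 h15 h16.
have [k0 [k1 [/andP [k0a k0b] /andP [k1a k1b] kc kD [kL2 kL4]]]] :=
  @knum R _ _ _ _ _ _ _ _ _ _ h1 h2 h3 h4 h5 h6 h7 h8 h9 h10 h11 h12 h13 h14 h15 h16.
case: (ltP z11 (x11 - k1)) => hc.
  exact: (@case_gt R _ _ _ _ _ _ _ _ _ _ _ _ h1 h2 h3 h4 h5 h6 h7 h8 h15 h16 k0a k0b k1a k1b kc kD kL2 kL4 h13 h11 hc).
case: (leP (x01 - k0) z01) => hc'.
  exact: (@case_le1 R _ _ _ _ _ _ _ _ _ _ _ _ h1 h2 h3 h4 h5 h6 h7 h8 h15 h16 k0a k0b k1a k1b kc kD kL2 kL4 h13 h11 hc hc').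
exact: (@case_le2 R _ _ _ _ _ _ _ _ _ _ _ _ h1 h2 h3 h4 h5 h6 h7 h8 h15 h16 k0a k0b k1a k1b kc kD kL2 kL4 h13 h11 hc hc').
Qed.

Lemma max4 (R : realFieldType) (a b c d : R) :
  let m := Num.max (Num.max a b) (Num.max c d) in [/\ a <= m, b <= m, c <= m & d <= m].
Proof. move=> m; rewrite /m; mm; split; lra. Qed.
Lemma min4 (R : realFieldType) (a b c d : R) :
  let m := Num.min (Num.min a b) (Num.min c d) in [/\ m <= a, m <= b, m <= c & m <= d].
Proof. move=> m; rewrite /m; mm; split; lra. Qed.

Definition flipq {R : realFieldType} (q : bool -> bool -> bool -> bool -> R) :=
  fun a b c d => q a b (~~ c) d.

Theorem proposition1 (R : realFieldType) (obs : bool -> bool -> bool -> R)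
    (c1 c2 : R) (hc1 : 0 <= c1 <= 1) (hc2 : 0 <= c2 <= 1)
    (hne : exists p : world -> R, admissible obs c1 c2 p) :
  (forall p : world -> R, admissible obs c1 c2 p ->
     lowerL obs c1 <= HR_TY p <= upperU obs c1) /\
  (exists p : world -> R, admissible obs c1 c2 p /\ HR_TY p = lowerL obs c1) /\
  (exists p : world -> R, admissible obs c1 c2 p /\ HR_TY p = upperU obs c1).
Proof.
have hc1' : 0 <= c1 by case/andP: hc1.
have hc2' : 0 <= c2 by case/andP: hc2.
have [ox00 [ox01 [ox10 [ox11 [oz00 [oz01 [oz10 [oz11 [oxs [ozs oD]]]]]]]]]] :
  0 <= obs false false false /\ 0 <= obs false false true /\ 0 <= obs false true false /\
      0 <= obs false true true /\ 0 <= obs true false false /\ 0 <= obs true false true /\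
      0 <= obs true true false /\ 0 <= obs true true true /\
   obs false false false + obs false false true + obs false true false + obs false true true = 1 /\
   obs true false false + obs true false true + obs true true false + obs true true true = 1 /\
   obs false false true + obs false true true - obs true false true - obs true true true <= c1.
  case: hne => p [[pp0 pp1] hc hts _].
  have qq := @proj_ge0 _ _ pp0.
  move: (qq false false false false) (qq false false false true) (qq false false true false) (qq false false true true) (qq false true false false) (qq false true false true) (qq false true true false) (qq false true true true) (qq true false false false) (qq true false false true) (qq true false true false) (qq true false true true) (qq true true false false) (qq true true false true) (qq true true true false) (qq true true true true) => *.
  have E t y s : obs t y s = if t then colq (qof p) y s else rowq (qof p) y s by rewrite -hc proj_obs.
  rewrite !E /=; rewrite /rowq /colq.
  move: pp1 hts; rewrite proj_tot proj_TS /rowq => *.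
  do 10 (split; first lra); lra.
have valid' := fun p hp => @valid R obs c1 c2 p hp.
split; first exact: valid'.
split.
- have [m1 m2 m3 m4] : [/\ 0 <= lowerL obs c1, obs false true true - obs true true true - c1 <= lowerL obs c1,
     PY obs true false - PY obs false false <= lowerL obs c1 &
     obs true false false - obs false false false - c1 <= lowerL obs c1] := @max4 R _ _ _ _.
  rewrite /PY in m3.
  have [q [q0 [r00 r01 r10 r11] [k00 k01 k10 k11] hb hbad]] :=
    @attain R (obs false false false) (obs false false true) (obs false true false) (obs false true true)
      (obs true false false) (obs true false true) (obs true true false) (obs true true true) c1 (lowerL obs c1)
      ox00 ox01 ox10 ox11 oz00 oz01 oz10 oz11 hc1' oD m1 m2 ltac:(lra) m4 oxs ozs.
  have hr : forall y s, rowq q y s = obs false y s by case; case.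
  have hk : forall y s, colq q y s = obs true y s by case; case.
  have ht : rowq q false false + rowq q false true + rowq q true false + rowq q true true = 1.
    by rewrite r00 r01 r10 r11.
  have [adm hty] := @lift_ok R obs c1 c2 q q0 hr hk ht hb hc2'.
  exists (liftp q); split => //.
  apply/le_anti/andP; split; first by rewrite hty.
  by case/andP: (valid' _ adm).
- have [u1 u2 u3 u4] : [/\ upperU obs c1 <= PY obs false true,
     upperU obs c1 <= c1 + obs false true false + obs true false true,
     upperU obs c1 <= PY obs true false &
     upperU obs c1 <= 1 + c1 - obs false false true - obs true true false] := @min4 R _ _ _ _.
  rewrite /PY in u1 u3.
  have [q [q0 [r00 r01 r10 r11] [k00 k01 k10 k11] hb hbad]] :=
    @attain R (obs false false false) (obs false false true) (obs false true false) (obs false true true)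
      (obs true true false) (obs true true true) (obs true false false) (obs true false true) c1
      (obs false true false + obs false true true - upperU obs c1)
      ox00 ox01 ox10 ox11 oz10 oz11 oz00 oz01 hc1' ltac:(lra) ltac:(lra) ltac:(lra) ltac:(lra) ltac:(lra) oxs ltac:(lra).
  have q0' : forall a b c d, 0 <= (flipq q) a b c d by move=> a b c d; exact: q0.
  have hr : forall y s, rowq (flipq q) y s = obs false y s.
    move: r00 r01 r10 r11; rewrite /rowq /flipq => ? ? ? ? y s; case: y; case: s => /=; lra.
  have hk : forall y s, colq (flipq q) y s = obs true y s.
    move: k00 k01 k10 k11; rewrite /colq /flipq => ? ? ? ? y s; case: y; case: s => /=; lra.
  have ht : rowq (flipq q) false false + rowq (flipq q) false true + rowq (flipq q) true false + rowq (flipq q) true true = 1.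
    by rewrite !hr.
  have hb' : (flipq q) false true false false + (flipq q) false true true false + (flipq q) true true false false
     + (flipq q) true true true false <= c1 by rewrite /flipq /=; lra.
  have [adm hty] := @lift_ok R obs c1 c2 (flipq q) q0' hr hk ht hb' hc2'.
  exists (liftp (flipq q)); split => //.
  apply/le_anti/andP; split; first by case/andP: (valid' _ adm).
  rewrite hty /flipq /=; move: r10 r11; rewrite /rowq => *; lra.
Qed.
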